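(* Let $f$ be a complex-valued harmonic function in a bounded open set $R\subset\mathbb{C}$. Suppose that $P=\operatorname{int}(\overline{R})\setminus R$ is empty or consists of finitely many poles of $f$, and suppose that $f$ extends continuously to $\partial R\setminus P$. Then $f(S)\cup f(\partial R\setminus P)$ partitions $\mathbb{C}$ into regions of constant valence: on each connected component of $\mathbb{C}\setminus(f(S)\cup f(\partial R\setminus P))$, the number of distinct $z\in R$ with $f(z)=w$ is constant.
   Context: Writing $f=u+iv$, $J_f=u_xv_y-u_yv_x$ and $S=\{z\in R: J_f(z)=0\}$. A point $\alpha$ is a pole of $f$ if $f$ is harmonic in $\{z:0<|z-\alpha|<r\}$ for some $r>0$ and $\lim_{z\to\alpha}|f(z)|=\infty$. $f(\partial R\setminus P)$ denotes the image under the continuous extension. *)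

(* Defs.v *)
From Stdlib Require Import Reals List.
From Coquelicot Require Import Coquelicot.
Open Scope R_scope.

Definition re_part (f : C -> C) (x y : R) : R := fst (f (x, y)).
Definition im_part (f : C -> C) (x y : R) : R := snd (f (x, y)).

Definition dx (g : R -> R -> R) : R -> R -> R :=
  fun x y => Derive (fun t => g t y) x.
Definition dy (g : R -> R -> R) : R -> R -> R :=
  fun x y => Derive (fun t => g x t) y.

Definition C2_at (g : R -> R -> R) (z : C) : Prop :=
  let x := fst z in let y := snd z in
  ex_derive (fun t => g t y) x /\ ex_derive (fun t => g x t) y /\
  ex_derive (fun t => dx g t y) x /\ ex_derive (fun t => dx g x t) y /\
  ex_derive (fun t => dy g t y) x /\ ex_derive (fun t => dy g x t) y /\
  continuous (fun p : C => g (fst p) (snd p)) z /\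
  continuous (fun p : C => dx g (fst p) (snd p)) z /\
  continuous (fun p : C => dy g (fst p) (snd p)) z /\
  continuous (fun p : C => dx (dx g) (fst p) (snd p)) z /\
  continuous (fun p : C => dy (dx g) (fst p) (snd p)) z /\
  continuous (fun p : C => dx (dy g) (fst p) (snd p)) z /\
  continuous (fun p : C => dy (dy g) (fst p) (snd p)) z.

Definition real_harmonic_on (D : C -> Prop) (g : R -> R -> R) : Prop :=
  forall z : C, D z ->
    C2_at g z /\ dx (dx g) (fst z) (snd z) + dy (dy g) (fst z) (snd z) = 0.

Definition harmonic_on (D : C -> Prop) (f : C -> C) : Prop :=
  real_harmonic_on D (re_part f) /\ real_harmonic_on D (im_part f).

Definition jacobian (f : C -> C) (z : C) : R :=
  dx (re_part f) (fst z) (snd z) * dy (im_part f) (fst z) (snd z)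
  - dy (re_part f) (fst z) (snd z) * dx (im_part f) (fst z) (snd z).

Definition critical_set (D : C -> Prop) (f : C -> C) (z : C) : Prop :=
  D z /\ jacobian f z = 0.

Definition bounded_set (D : C -> Prop) : Prop :=
  exists M : R, forall z, D z -> Cmod z <= M.

Definition closure (D : C -> Prop) (z : C) : Prop :=
  forall eps : R, 0 < eps -> exists w, D w /\ Cmod (w - z) < eps.

Definition interior (D : C -> Prop) (z : C) : Prop :=
  exists eps : R, 0 < eps /\ forall w, Cmod (w - z) < eps -> D w.

Definition boundary (D : C -> Prop) (z : C) : Prop :=
  closure D z /\ ~ interior D z.

Definition P_set (D : C -> Prop) (z : C) : Prop :=
  interior (closure D) z /\ ~ D z.

Definition is_pole (f : C -> C) (alpha : C) : Prop :=
  (exists r : R, 0 < r /\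
     harmonic_on (fun z => 0 < Cmod (z - alpha) < r) f) /\
  (forall M : R, exists delta : R, 0 < delta /\
     forall z, 0 < Cmod (z - alpha) < delta -> M < Cmod (f z)).

Definition finite_set (A : C -> Prop) : Prop :=
  exists l : list C, forall z, A z <-> In z l.

Definition image (f : C -> C) (A : C -> Prop) (w : C) : Prop :=
  exists z, A z /\ f z = w.

Definition connected_set (K : C -> Prop) : Prop :=
  forall U V : C -> Prop, open U -> open V ->
    (forall z, K z -> U z \/ V z) ->
    (forall z, K z -> U z -> V z -> False) ->
    (exists z, K z /\ U z) -> (exists z, K z /\ V z) -> False.

Definition same_card (A B : C -> Prop) : Prop :=
  exists g : C -> C,
    (forall z, A z -> B (g z)) /\
    (forall z1 z2, A z1 -> A z2 -> g z1 = g z2 -> z1 = z2) /\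
    (forall w, B w -> exists z, A z /\ g z = w).

(* Main.v *)
Require Import Defs.
From Stdlib Require Import Reals List Lra Psatz ClassicalEpsilon Classical.
From Coquelicot Require Import Coquelicot.
Open Scope R_scope.

Lemma Cmod_le_sum (z : C) : Cmod z <= Rabs (fst z) + Rabs (snd z).
Proof.
  destruct z as [x y]; unfold Cmod; simpl.
  rewrite <- (sqrt_Rsqr (Rabs x + Rabs y)) by (pose proof (Rabs_pos x); pose proof (Rabs_pos y); lra).
  apply sqrt_le_1_alt. unfold Rsqr.
  pose proof (Rabs_pos x); pose proof (Rabs_pos y).
  pose proof (pow2_abs x); pose proof (pow2_abs y). nra.
Qed.

Lemma Cmod_ge_fst (z : C) : Rabs (fst z) <= Cmod z.
Proof. pose proof (Rmax_Cmod z). pose proof (Rmax_l (Rabs (fst z)) (Rabs (snd z))). lra. Qed.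
Lemma Cmod_ge_snd (z : C) : Rabs (snd z) <= Cmod z.
Proof. pose proof (Rmax_Cmod z). pose proof (Rmax_r (Rabs (fst z)) (Rabs (snd z))). lra. Qed.

Definition Fib (D : C -> Prop) (f : C -> C) (w : C) : C -> Prop := fun z => D z /\ f z = w.

Lemma same_card_refl A : same_card A A.
Proof. exists (fun z => z). repeat split; eauto. Qed.

Lemma same_card_trans A B E : same_card A B -> same_card B E -> same_card A E.
Proof.
  intros [g [g1 [g2 g3]]] [h [h1 [h2 h3]]].
  exists (fun z => h (g z)). repeat split; eauto.
  intros w Hw. destruct (h3 w Hw) as [y [Hy Hyw]]. destruct (g3 y Hy) as [z [Hz Hzy]].
  exists z; split; auto. congruence.
Qed.

Lemma same_card_sym A B : same_card A B -> same_card B A.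
Proof.
  intros [g [g1 [g2 g3]]].
  set (gi := fun w => epsilon (inhabits (0%R,0%R) : inhabited C) (fun z => A z /\ g z = w)).
  assert (Hgi : forall w, B w -> A (gi w) /\ g (gi w) = w).
  { intros w Hw. unfold gi. apply (epsilon_spec (inhabits (0%R,0%R) : inhabited C) (fun z => A z /\ g z = w)). auto. }
  exists gi. repeat split.
  - intros w Hw; apply Hgi; auto.
  - intros w1 w2 H1 H2 E. destruct (Hgi w1 H1) as [_ E1]; destruct (Hgi w2 H2) as [_ E2]. congruence.
  - intros z Hz. exists (g z). split; auto. destruct (Hgi (g z) (g1 z Hz)) as [Ha Hb]. apply g2; auto.
Qed.

Lemma ball_C (w y : C) (e : R) : ball w e y -> Rabs (fst y - fst w) < e /\ Rabs (snd y - snd w) < e.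
Proof. intros [H1 H2]. split; [change (Rabs (fst y - fst w) < e) in H1 | change (Rabs (snd y - snd w) < e) in H2]; auto. Qed.

Lemma C_ball (w y : C) (e : R) : Rabs (fst y - fst w) < e -> Rabs (snd y - snd w) < e -> ball w e y.
Proof. intros H1 H2. split; [change (Rabs (fst y - fst w) < e) | change (Rabs (snd y - snd w) < e)]; auto. Qed.

Lemma Cmod_tri3 (y w a : C) : Cmod (y - a)%C <= Cmod (y - w)%C + Cmod (w - a)%C.
Proof.
  replace (y - a)%C with ((y - w) + (w - a))%C. apply Cmod_triangle.
  destruct y, w, a; apply injective_projections; simpl; ring.
Qed.

Lemma Cmod_sub_comps (y w : C) : Cmod (y - w)%C <= Rabs (fst y - fst w) + Rabs (snd y - snd w).
Proof. apply (Cmod_le_sum (y - w)%C). Qed.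

Lemma Cmod_self (z : C) : Cmod (z - z)%C = 0.
Proof. destruct z as [x y]. unfold Cmod; simpl. replace (x + - x) with 0 by ring.
  replace (y + - y) with 0 by ring. replace (0 * (0 * 1) + 0 * (0 * 1)) with 0 by ring. apply sqrt_0. Qed.

Section Wrap.
Variables (D : C -> Prop) (f : C -> C).
Hypothesis Hloc : forall w0, ~ image f (critical_set D f) w0 ->
   ~ image f (fun z => boundary D z /\ ~ P_set D z) w0 ->
   exists r, 0 < r /\ forall w, Cmod (w - w0)%C < r -> same_card (Fib D f w0) (Fib D f w).

Lemma wrap (w1 w2 : C) :
    (exists K : C -> Prop, connected_set K /\ K w1 /\ K w2 /\
       forall w, K w ->
         ~ image f (critical_set D f) w /\
         ~ image f (fun z => boundary D z /\ ~ P_set D z) w) ->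
    same_card (Fib D f w1) (Fib D f w2).
Proof.
  intros [K [HK [K1 [K2 HKw]]]].
  destruct (classic (same_card (Fib D f w1) (Fib D f w2))) as [H|Hn]; auto. exfalso.
  set (Q := fun a r => 0 < r /\ forall w', Cmod (w' - a)%C < r -> same_card (Fib D f a) (Fib D f w')).
  set (U := fun w => exists a r, Q a r /\ Cmod (w - a)%C < r /\ same_card (Fib D f w1) (Fib D f a)).
  set (V := fun w => exists a r, Q a r /\ Cmod (w - a)%C < r /\ ~ same_card (Fib D f w1) (Fib D f a)).
  assert (Hopen : forall (S : C -> Prop), open (fun w => exists a r, Q a r /\ Cmod (w - a)%C < r /\ S a)).
  { intros S w [a [r [HQ [Hr HS]]]].
    assert (He : 0 < (r - Cmod (w - a)%C) / 2) by lra.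
    exists (mkposreal _ He). intros y Hy. apply ball_C in Hy. simpl in Hy.
    exists a, r. split; [exact HQ|split; [|exact HS]].
    pose proof (Cmod_tri3 y w a). pose proof (Cmod_sub_comps y w). lra. }
  assert (Hl : forall w, K w -> exists r, Q w r).
  { intros w Kw. destruct (HKw w Kw) as [A B]. destruct (Hloc w A B) as [r [Hr Hr2]].
    exists r; split; auto. }
  apply (HK U V (Hopen _) (Hopen _)).
  - intros z Kz. destruct (Hl z Kz) as [r [Hr Hr2]].
    assert (Cmod (z - z)%C < r).
    { rewrite Cmod_self; auto. }
    destruct (classic (same_card (Fib D f w1) (Fib D f z))).
    + left. exists z, r. repeat split; auto.
    + right. exists z, r. repeat split; auto.
  - intros z Kz [a [r [[_ Ha] [Hz Sa]]]] [b [s [[_ Hb] [Hz' Sb]]]].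
    apply Sb. apply same_card_trans with (Fib D f a); auto.
    apply same_card_trans with (Fib D f z); auto. apply same_card_sym; auto.
  - exists w1. split; auto. destruct (Hl w1 K1) as [r [Hr Hr2]]. exists w1, r.
    assert (Cmod (w1 - w1)%C < r).
    { rewrite Cmod_self; auto. }
    split; [split; auto | split; [auto | apply same_card_refl]].
  - exists w2. split; auto. destruct (Hl w2 K2) as [r [Hr Hr2]]. exists w2, r.
    assert (Cmod (w2 - w2)%C < r).
    { rewrite Cmod_self; auto. }
    split; [split; auto | split; auto].
Qed.
End Wrap.

Definition box (z0 : C) (r : R) (z : C) : Prop :=
  Rabs (fst z - fst z0) < r /\ Rabs (snd z - snd z0) < r.

Lemma between_abs (a b t x0 r : R) : Rabs (a - x0) < r -> Rabs (b - x0) < r ->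
  Rmin a b <= t <= Rmax a b -> Rabs (t - x0) < r.
Proof.
  intros Ha Hb Ht. apply Rabs_lt_between' in Ha. apply Rabs_lt_between' in Hb.
  apply Rabs_lt_between'. unfold Rmin, Rmax in Ht. destruct (Rle_dec a b); lra.
Qed.

Lemma mvt_x (g : R -> R -> R) (x1 x2 y : R) :
  (forall t, Rmin x1 x2 <= t <= Rmax x1 x2 -> ex_derive (fun s => g s y) t) ->
  exists c, Rmin x1 x2 <= c <= Rmax x1 x2 /\ g x2 y - g x1 y = dx g c y * (x2 - x1).
Proof.
  intros H. apply (MVT_gen (fun s => g s y) x1 x2 (fun c => dx g c y)).
  - intros t Ht. unfold dx. apply Derive_correct. apply H; lra.
  - intros t Ht. apply continuity_pt_filterlim. exact (@ex_derive_continuous R_AbsRing R_NormedModule _ t (H t ltac:(lra))).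
Qed.

Lemma mvt_y (g : R -> R -> R) (x y1 y2 : R) :
  (forall t, Rmin y1 y2 <= t <= Rmax y1 y2 -> ex_derive (fun s => g x s) t) ->
  exists c, Rmin y1 y2 <= c <= Rmax y1 y2 /\ g x y2 - g x y1 = dy g x c * (y2 - y1).
Proof.
  intros H. apply (MVT_gen (fun s => g x s) y1 y2 (fun c => dy g x c)).
  - intros t Ht. unfold dy. apply Derive_correct. apply H; lra.
  - intros t Ht. apply continuity_pt_filterlim. exact (@ex_derive_continuous R_AbsRing R_NormedModule _ t (H t ltac:(lra))).
Qed.

Lemma cont_extract (F : C -> R) (z0 : C) (eps : R) : continuous F z0 -> 0 < eps ->
  exists rho, 0 < rho /\ forall p, box z0 rho p -> Rabs (F p - F z0) < eps.
Proof.
  intros Hc He. destruct (proj1 (filterlim_locally F (F z0)) Hc (mkposreal _ He)) as [rho Hr].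
  exists rho. split. apply cond_pos. intros p [H1 H2]. apply (Hr p). apply C_ball; auto.
Qed.

Lemma open_box (D : C -> Prop) (z0 : C) : open D -> D z0 -> exists rho, 0 < rho /\ forall z, box z0 rho z -> D z.
Proof.
  intros HD Hz. destruct (HD z0 Hz) as [rho Hr]. exists rho. split. apply cond_pos.
  intros z [H1 H2]. apply Hr. apply C_ball; auto.
Qed.

Lemma est_g (D : C -> Prop) (g : R -> R -> R) (z0 : C) (eps : R) :
  open D -> real_harmonic_on D g -> D z0 -> 0 < eps ->
  exists rho, 0 < rho /\ (forall z, box z0 rho z -> D z) /\
   forall z1 z2, box z0 rho z1 -> box z0 rho z2 ->
    Rabs (g (fst z2) (snd z2) - g (fst z1) (snd z1)
          - (dx g (fst z0) (snd z0) * (fst z2 - fst z1) + dy g (fst z0) (snd z0) * (snd z2 - snd z1)))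
    <= eps * (Rabs (fst z2 - fst z1) + Rabs (snd z2 - snd z1)).
Proof.
  intros HD Hg Hz0 He.
  destruct (open_box D z0 HD Hz0) as [r0 [Hr0 Hb0]].
  destruct (Hg z0 Hz0) as [[_ [_ [_ [_ [_ [_ [_ [Cx [Cy _]]]]]]]]] _].
  destruct (cont_extract _ _ eps Cx He) as [r1 [Hr1 H1]].
  destruct (cont_extract _ _ eps Cy He) as [r2 [Hr2 H2]].
  exists (Rmin r0 (Rmin r1 r2)).
  assert (Hm0 := Rmin_l r0 (Rmin r1 r2)). assert (Hm := Rmin_r r0 (Rmin r1 r2)).
  assert (Hm1 := Rmin_l r1 r2). assert (Hm2 := Rmin_r r1 r2).
  assert (Hbox : forall r r' z, r <= r' -> box z0 r z -> box z0 r' z).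
  { intros r r' z Hle [A B]; split; lra. }
  split. { apply Rmin_pos; auto. apply Rmin_pos; auto. }
  split. { intros z Hz. apply Hb0. apply (Hbox _ _ _ Hm0 Hz). }
  intros [x1 y1] [x2 y2] [A1 B1] [A2 B2]; simpl in *.
  destruct (mvt_x g x1 x2 y2) as [xi [Hxi Exi]].
  { intros t Ht. assert (Dt : D (t, y2)).
    { apply Hb0. split; simpl. apply (between_abs x1 x2); auto; lra. lra. }
    destruct (Hg _ Dt) as [[E _] _]. exact E. }
  destruct (mvt_y g x1 y1 y2) as [eta [Heta Eeta]].
  { intros t Ht. assert (Dt : D (x1, t)).
    { apply Hb0. split; simpl. lra. apply (between_abs y1 y2); auto; lra. }
    destruct (Hg _ Dt) as [[_ [E _]] _]. exact E. }
  assert (Bxi : Rabs (dx g xi y2 - dx g (fst z0) (snd z0)) < eps).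
  { apply (H1 (xi, y2)). split; simpl. apply (between_abs x1 x2); auto; lra. lra. }
  assert (Beta : Rabs (dy g x1 eta - dy g (fst z0) (snd z0)) < eps).
  { apply (H2 (x1, eta)). split; simpl. lra. apply (between_abs y1 y2); auto; lra. }
  replace (g x2 y2 - g x1 y1 - (dx g (fst z0) (snd z0) * (x2 - x1) + dy g (fst z0) (snd z0) * (y2 - y1)))
    with ((dx g xi y2 - dx g (fst z0) (snd z0)) * (x2 - x1) + (dy g x1 eta - dy g (fst z0) (snd z0)) * (y2 - y1)) by lra.
  eapply Rle_trans. apply Rabs_triang. rewrite !Rabs_mult.
  pose proof (Rabs_pos (x2 - x1)). pose proof (Rabs_pos (y2 - y1)). nra.
Qed.

Definition dist1 (z z' : C) : R := Rabs (fst z - fst z') + Rabs (snd z - snd z').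

Lemma dist1_pos z z' : 0 <= dist1 z z'.
Proof. unfold dist1. pose proof (Rabs_pos (fst z - fst z')). pose proof (Rabs_pos (snd z - snd z')). lra. Qed.

Lemma dist1_sym z z' : dist1 z z' = dist1 z' z.
Proof. unfold dist1. rewrite (Rabs_minus_sym (fst z)), (Rabs_minus_sym (snd z)). auto. Qed.

Lemma dist1_tri x y z : dist1 x z <= dist1 x y + dist1 y z.
Proof.
  unfold dist1.
  replace (fst x - fst z) with ((fst x - fst y) + (fst y - fst z)) by ring.
  replace (snd x - snd z) with ((snd x - snd y) + (snd y - snd z)) by ring.
  pose proof (Rabs_triang (fst x - fst y) (fst y - fst z)).
  pose proof (Rabs_triang (snd x - snd y) (snd y - snd z)). lra.
Qed.

Lemma dist1_box z0 r z : dist1 z z0 < r -> box z0 r z.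
Proof. unfold dist1, box. intros H. pose proof (Rabs_pos (fst z - fst z0)). pose proof (Rabs_pos (snd z - snd z0)). split; lra. Qed.

Lemma half_pow_pos n : 0 < (/2) ^ n.
Proof. apply pow_lt. lra. Qed.

Lemma half_pow_le1 n : (/2) ^ n <= 1.
Proof. induction n; simpl. lra. pose proof (half_pow_pos n). lra. Qed.

Lemma fixed_point (T : C -> C) (z0 : C) (rho : R) :
  (forall z1 z2, box z0 rho z1 -> box z0 rho z2 -> dist1 (T z2) (T z1) <= dist1 z2 z1 / 2) ->
  2 * dist1 (T z0) z0 < rho ->
  exists z, dist1 z z0 <= 2 * dist1 (T z0) z0 /\ T z = z.
Proof.
  intros Hc Hs. set (s0 := dist1 (T z0) z0) in *.
  assert (Hs0 : 0 <= s0) by apply dist1_pos.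
  set (zs := fun n => Nat.iter n T z0).
  assert (Hzs : forall n, zs (S n) = T (zs n)) by reflexivity.
  assert (Inv : forall n, dist1 (zs (S n)) (zs n) <= s0 * (/2)^n /\ dist1 (zs n) z0 <= 2 * s0 * (1 - (/2)^n)).
  { induction n as [|n [IH1 IH2]].
    - simpl. unfold dist1 at 2. simpl. rewrite Rminus_diag, Rminus_diag, Rabs_R0. unfold s0. lra.
    - assert (A : dist1 (zs (S n)) z0 <= 2 * s0 * (1 - (/2) ^ S n)).
      { pose proof (dist1_tri (zs (S n)) (zs n) z0). simpl pow. lra. }
      split; [|exact A].
      rewrite (Hzs (S n)).
      pose proof (half_pow_pos n). pose proof (half_pow_le1 n).
      assert (B1 : box z0 rho (zs n)).
      { apply dist1_box. assert (2 * s0 * (1 - (/2)^n) <= 2 * s0) by nra. lra. }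
      assert (B2 : box z0 rho (zs (S n))).
      { apply dist1_box. pose proof (half_pow_pos (S n)).
        assert (2 * s0 * (1 - (/2)^(S n)) <= 2 * s0) by nra. lra. }
      eapply Rle_trans; [apply (Hc (zs n) (zs (S n)) B1 B2)|].
      simpl pow. replace (s0 * (/2 * (/2)^n)) with (s0 * (/2)^n / 2) by field. lra. }
  assert (Cau : forall n k, dist1 (zs (n + k)%nat) (zs n) <= 2 * s0 * (/2)^n * (1 - (/2)^k)).
  { intros n k. induction k as [|k IH].
    - rewrite Nat.add_0_r. unfold dist1. rewrite !Rminus_diag, Rabs_R0. simpl. lra.
    - replace (n + S k)%nat with (S (n + k)) by lia.
      pose proof (dist1_tri (zs (S (n + k))) (zs (n + k)%nat) (zs n)).
      destruct (Inv (n + k)%nat) as [I1 _]. rewrite pow_add in I1. simpl pow.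
      pose proof (half_pow_pos n). pose proof (half_pow_pos k). nra. }
  assert (Cau2 : forall n m, (n <= m)%nat -> dist1 (zs m) (zs n) <= 2 * s0 * (/2)^n).
  { intros n m Hnm. replace m with (n + (m - n))%nat by lia. eapply Rle_trans. apply Cau.
    pose proof (half_pow_pos n). pose proof (half_pow_pos (m - n)).
    assert (0 <= 2 * s0 * (/2)^n) by (apply Rmult_le_pos; lra). nra. }
  assert (Small : forall eps, 0 < eps -> exists M, forall n, (n >= M)%nat -> 2 * s0 * (/2)^n < eps).
  { intros eps He. destruct (pow_lt_1_zero (/2) ltac:(rewrite Rabs_pos_eq; lra) (eps / (2 * s0 + 1)))
      as [M HM]. { apply Rdiv_lt_0_compat; lra. }
    exists M. intros n Hn. specialize (HM n Hn). rewrite Rabs_pos_eq in HM by (apply Rlt_le, half_pow_pos).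
    apply Rmult_lt_compat_l with (r := 2 * s0 + 1) in HM; [|lra].
    replace ((2 * s0 + 1) * (eps / (2 * s0 + 1))) with eps in HM by (field; lra).
    pose proof (half_pow_pos n). nra. }
  assert (Cc : forall (pr : C -> R), (forall z z', Rabs (pr z - pr z') <= dist1 z z') ->
     Cauchy_crit (fun n => pr (zs n))).
  { intros pr Hpr eps He. destruct (Small eps He) as [M HM]. exists M. intros n m Hn Hm.
    unfold Rdist. destruct (Nat.le_ge_cases n m) as [Hle|Hle].
    - rewrite Rabs_minus_sym. eapply Rle_lt_trans. apply Hpr. eapply Rle_lt_trans. apply Cau2; auto. apply HM; auto.
    - eapply Rle_lt_trans. apply Hpr. eapply Rle_lt_trans. apply Cau2; auto. apply HM; auto. }
  assert (Hf : forall z z', Rabs (fst z - fst z') <= dist1 z z').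
  { intros. unfold dist1. pose proof (Rabs_pos (snd z - snd z')). lra. }
  assert (Hsn : forall z z', Rabs (snd z - snd z') <= dist1 z z').
  { intros. unfold dist1. pose proof (Rabs_pos (fst z - fst z')). lra. }
  destruct (Rcomplete.R_complete _ (Cc fst Hf)) as [lx Hlx].
  destruct (Rcomplete.R_complete _ (Cc snd Hsn)) as [ly Hly].
  set (zst := (lx, ly) : C).
  assert (Near : forall eta, 0 < eta -> exists M, forall n, (n >= M)%nat -> dist1 zst (zs n) < eta).
  { intros eta He. destruct (Hlx (eta/2) ltac:(lra)) as [M1 H1]. destruct (Hly (eta/2) ltac:(lra)) as [M2 H2].
    exists (M1 + M2)%nat. intros n Hn. unfold dist1, zst; simpl.
    specialize (H1 n ltac:(lia)). specialize (H2 n ltac:(lia)). unfold Rdist in H1, H2.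
    rewrite Rabs_minus_sym in H1. rewrite Rabs_minus_sym in H2. lra. }
  assert (C1 : dist1 zst z0 <= 2 * s0).
  { destruct (Rle_lt_dec (dist1 zst z0) (2 * s0)) as [H|H]; auto. exfalso.
    destruct (Near ((dist1 zst z0 - 2 * s0) / 2) ltac:(lra)) as [M HM].
    specialize (HM M (le_n _)). pose proof (dist1_tri zst (zs M) z0).
    destruct (Inv M) as [_ I2]. pose proof (half_pow_pos M). nra. }
  exists zst. split; [exact C1|].
  assert (Bz : box z0 rho zst) by (apply dist1_box; lra).
  assert (D0 : dist1 (T zst) zst = 0).
  { destruct (Rle_lt_dec (dist1 (T zst) zst) 0) as [H|H]. pose proof (dist1_pos (T zst) zst). lra. exfalso.
    set (dl := dist1 (T zst) zst).
    destruct (Near (dl / 4) ltac:(unfold dl; lra)) as [M HM].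
    pose proof (HM M (le_n _)) as A1. pose proof (HM (S M) ltac:(lia)) as A2.
    pose proof (dist1_tri (T zst) (zs (S M)) zst).
    assert (Bm : box z0 rho (zs M)).
    { apply dist1_box. destruct (Inv M) as [_ I2]. pose proof (half_pow_pos M).
      assert (2 * s0 * (1 - (/2)^M) <= 2 * s0) by nra. lra. }
    assert (X : dist1 (T zst) (zs (S M)) <= dist1 zst (zs M) / 2) by exact (Hc (zs M) zst Bm Bz).
    rewrite (dist1_sym (zs (S M)) zst) in H0. unfold dl in *. lra. }
  unfold dist1 in D0. pose proof (Rabs_pos (fst (T zst) - fst zst)). pose proof (Rabs_pos (snd (T zst) - snd zst)).
  assert (E1 : Rabs (fst (T zst) - fst zst) = 0) by lra.
  assert (E2 : Rabs (snd (T zst) - snd zst) = 0) by lra.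
  apply injective_projections.
  - destruct (Req_dec (fst (T zst) - fst zst) 0). lra. exfalso. apply (Rabs_no_R0 _ H1 E1).
  - destruct (Req_dec (snd (T zst) - snd zst) 0). lra. exfalso. apply (Rabs_no_R0 _ H1 E2).
Qed.

Lemma abs_lin (p q x y : R) : Rabs (p * x + q * y) <= Rabs p * Rabs x + Rabs q * Rabs y.
Proof. rewrite <- !Rabs_mult. apply Rabs_triang. Qed.

Lemma alg2 (a b c e E1 E2 : R) : a * e - b * c <> 0 ->
  Rabs ((e * E1 - b * E2) / (a * e - b * c)) + Rabs ((- c * E1 + a * E2) / (a * e - b * c))
  <= (Rabs a + Rabs b + Rabs c + Rabs e) * (Rabs E1 + Rabs E2) / Rabs (a * e - b * c).
Proof.
  intros HJ. set (J := a * e - b * c) in *.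
  assert (HaJ : 0 < Rabs J) by (apply Rabs_pos_lt; auto).
  unfold Rdiv. rewrite !Rabs_mult, Rabs_inv.
  assert (X1 : Rabs (e * E1 - b * E2) <= Rabs e * Rabs E1 + Rabs b * Rabs E2).
  { replace (e * E1 - b * E2) with (e * E1 + (- b) * E2) by ring. rewrite <- (Rabs_Ropp b). apply abs_lin. }
  assert (X2 : Rabs (- c * E1 + a * E2) <= Rabs c * Rabs E1 + Rabs a * Rabs E2).
  { rewrite <- (Rabs_Ropp c). apply abs_lin. }
  assert (Hi : 0 < / Rabs J) by (apply Rinv_0_lt_compat; auto).
  pose proof (Rabs_pos a). pose proof (Rabs_pos b). pose proof (Rabs_pos c). pose proof (Rabs_pos e).
  pose proof (Rabs_pos E1). pose proof (Rabs_pos E2).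
  assert (Rabs e * Rabs E1 + Rabs b * Rabs E2 + (Rabs c * Rabs E1 + Rabs a * Rabs E2)
          <= (Rabs a + Rabs b + Rabs c + Rabs e) * (Rabs E1 + Rabs E2)) by nra.
  nra.
Qed.

Lemma re_eq (f : C -> C) (z : C) : re_part f (fst z) (snd z) = fst (f z).
Proof. destruct z; reflexivity. Qed.
Lemma im_eq (f : C -> C) (z : C) : im_part f (fst z) (snd z) = snd (f z).
Proof. destruct z; reflexivity. Qed.

Lemma IFT (D : C -> Prop) (f : C -> C) : open D -> harmonic_on D f ->
  forall z0, D z0 -> jacobian f z0 <> 0 ->
  exists rho c, 0 < rho /\ 0 < c /\ (forall z, box z0 rho z -> D z) /\
   (forall z1 z2, box z0 rho z1 -> box z0 rho z2 -> f z1 = f z2 -> z1 = z2) /\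
   (forall sg w, 0 < sg <= rho -> Cmod (w - f z0)%C < c * sg -> exists z, box z0 sg z /\ f z = w).
Proof.
  intros HD [Hu Hv] z0 Dz0 HJ.
  set (a := dx (re_part f) (fst z0) (snd z0)) in *.
  set (b := dy (re_part f) (fst z0) (snd z0)) in *.
  set (c := dx (im_part f) (fst z0) (snd z0)) in *.
  set (e := dy (im_part f) (fst z0) (snd z0)) in *.
  assert (HJ' : a * e - b * c <> 0) by exact HJ. clear HJ.
  set (J := a * e - b * c) in *.
  set (al := Rabs a + Rabs b + Rabs c + Rabs e).
  assert (HaJ : 0 < Rabs J) by (apply Rabs_pos_lt; auto).
  assert (Hal : 0 < al).
  { unfold al. pose proof (Rabs_pos a). pose proof (Rabs_pos b). pose proof (Rabs_pos c). pose proof (Rabs_pos e).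
    destruct (Rle_lt_dec (Rabs a + Rabs b + Rabs c + Rabs e) 0) as [Hx|Hx]; auto. exfalso.
    assert (Ha0 : a = 0) by (apply Rabs_eq_0; lra). assert (Hb0 : b = 0) by (apply Rabs_eq_0; lra).
    apply HJ'. unfold J. rewrite Ha0, Hb0. ring. }
  set (eps := Rabs J / (4 * al)).
  assert (Heps : 0 < eps) by (unfold eps; apply Rdiv_lt_0_compat; lra).
  assert (Keps : al * (2 * eps) / Rabs J = / 2) by (unfold eps; field; lra).
  destruct (est_g D (re_part f) z0 eps HD Hu Dz0 Heps) as [r1 [Hr1 [Db1 Es1]]].
  destruct (est_g D (im_part f) z0 eps HD Hv Dz0 Heps) as [r2 [Hr2 [Db2 Es2]]].
  set (rho := Rmin r1 r2).
  assert (Hm1 := Rmin_l r1 r2). assert (Hm2 := Rmin_r r1 r2).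
  assert (Hbox : forall r r' z, r <= r' -> box z0 r z -> box z0 r' z).
  { intros r r' z Hle [A B]; split; lra. }
  assert (Err : forall z1 z2, box z0 rho z1 -> box z0 rho z2 ->
     Rabs (fst (f z2) - fst (f z1) - (a * (fst z2 - fst z1) + b * (snd z2 - snd z1))) <= eps * dist1 z2 z1 /\
     Rabs (snd (f z2) - snd (f z1) - (c * (fst z2 - fst z1) + e * (snd z2 - snd z1))) <= eps * dist1 z2 z1).
  { intros z1 z2 B1 B2. split.
    - rewrite <- !re_eq. apply Es1; eapply Hbox; eauto.
    - rewrite <- !im_eq. apply Es2; eapply Hbox; eauto. }
  exists rho, eps. split; [apply Rmin_pos; auto|]. split; [auto|]. split.
  { intros z Hz. apply Db1. eapply Hbox; eauto. }
  split.
  - intros z1 z2 B1 B2 Ef.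
    destruct (Err z1 z2 B1 B2) as [E1 E2]. rewrite Ef in E1, E2.
    set (h1 := fst z2 - fst z1) in *. set (h2 := snd z2 - snd z1) in *.
    set (p := a * h1 + b * h2) in *. set (q := c * h1 + e * h2) in *.
    replace (fst (f z2) - fst (f z2) - p) with (- p) in E1 by ring.
    replace (snd (f z2) - snd (f z2) - q) with (- q) in E2 by ring.
    rewrite Rabs_Ropp in E1, E2.
    pose proof (alg2 a b c e p q HJ') as A.
    replace ((e * p - b * q) / (a * e - b * c)) with h1 in A by (unfold p, q; field; auto).
    replace ((- c * p + a * q) / (a * e - b * c)) with h2 in A by (unfold p, q; field; auto).
    fold J al in A.
    assert (Hd : dist1 z2 z1 = Rabs h1 + Rabs h2) by reflexivity.
    assert (A2 : al * (Rabs p + Rabs q) / Rabs J <= al * (2 * eps * dist1 z2 z1) / Rabs J).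
    { unfold Rdiv. apply Rmult_le_compat_r. left; apply Rinv_0_lt_compat; auto.
      apply Rmult_le_compat_l; lra. }
    replace (al * (2 * eps * dist1 z2 z1) / Rabs J) with (al * (2 * eps) / Rabs J * dist1 z2 z1) in A2
      by (field; lra).
    rewrite Keps in A2.
    pose proof (Rabs_pos h1). pose proof (Rabs_pos h2).
    assert (Z1 : Rabs h1 = 0) by lra. assert (Z2 : Rabs h2 = 0) by lra.
    apply Rabs_eq_0 in Z1. apply Rabs_eq_0 in Z2. unfold h1, h2 in *.
    apply injective_projections; lra.
  - intros sg w [Hsg Hsr] Hw.
    set (T := fun z : C => (fst z - (e * (fst (f z) - fst w) - b * (snd (f z) - snd w)) / J,
                            snd z - (- c * (fst (f z) - fst w) + a * (snd (f z) - snd w)) / J) : C).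
    assert (Contr : forall z1 z2, box z0 sg z1 -> box z0 sg z2 -> dist1 (T z2) (T z1) <= dist1 z2 z1 / 2).
    { intros z1 z2 B1 B2.
      assert (B1' : box z0 rho z1) by (eapply Hbox; eauto).
      assert (B2' : box z0 rho z2) by (eapply Hbox; eauto).
      destruct (Err z1 z2 B1' B2') as [E1 E2].
      set (h1 := fst z2 - fst z1) in *. set (h2 := snd z2 - snd z1) in *.
      set (X1 := fst (f z2) - fst (f z1) - (a * h1 + b * h2)) in *.
      set (X2 := snd (f z2) - snd (f z1) - (c * h1 + e * h2)) in *.
      assert (Q1 : fst (T z2) - fst (T z1) = - ((e * X1 - b * X2) / J)).
      { unfold T, X1, X2, h1, h2, J; simpl. field. auto. }
      assert (Q2 : snd (T z2) - snd (T z1) = - ((- c * X1 + a * X2) / J)).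
      { unfold T, X1, X2, h1, h2, J; simpl. field. auto. }
      unfold dist1 at 1. rewrite Q1, Q2, !Rabs_Ropp.
      eapply Rle_trans. apply (alg2 a b c e X1 X2 HJ'). fold J al.
      assert (A2 : al * (Rabs X1 + Rabs X2) / Rabs J <= al * (2 * eps * dist1 z2 z1) / Rabs J).
      { unfold Rdiv. apply Rmult_le_compat_r. left; apply Rinv_0_lt_compat; auto.
        apply Rmult_le_compat_l; lra. }
      replace (al * (2 * eps * dist1 z2 z1) / Rabs J) with (al * (2 * eps) / Rabs J * dist1 z2 z1) in A2
        by (field; lra).
      rewrite Keps in A2. lra. }
    assert (S0 : 2 * dist1 (T z0) z0 < sg).
    { set (P0 := fst (f z0) - fst w). set (Q0 := snd (f z0) - snd w).
      assert (Q1 : fst (T z0) - fst z0 = - ((e * P0 - b * Q0) / J)) by (unfold T, P0, Q0; simpl; ring).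
      assert (Q2 : snd (T z0) - snd z0 = - ((- c * P0 + a * Q0) / J)) by (unfold T, P0, Q0; simpl; ring).
      unfold dist1. rewrite Q1, Q2, !Rabs_Ropp.
      pose proof (alg2 a b c e P0 Q0 HJ') as A. fold J al in A.
      assert (HP : Rabs P0 <= Cmod (w - f z0)%C).
      { unfold P0. rewrite Rabs_minus_sym. apply (Cmod_ge_fst (w - f z0)%C). }
      assert (HQ : Rabs Q0 <= Cmod (w - f z0)%C).
      { unfold Q0. rewrite Rabs_minus_sym. apply (Cmod_ge_snd (w - f z0)%C). }
      assert (A2 : al * (Rabs P0 + Rabs Q0) / Rabs J < al * (2 * eps * sg) / Rabs J).
      { unfold Rdiv. apply Rmult_lt_compat_r. apply Rinv_0_lt_compat; auto.
        apply Rmult_lt_compat_l; lra. }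
      replace (al * (2 * eps * sg) / Rabs J) with (al * (2 * eps) / Rabs J * sg) in A2 by (field; lra).
      rewrite Keps in A2. lra. }
    destruct (fixed_point T z0 sg Contr S0) as [z [Hz Tz]].
    exists z. split. { apply dist1_box. lra. }
    assert (F1 : (e * (fst (f z) - fst w) - b * (snd (f z) - snd w)) / J = 0).
    { assert (H := f_equal fst Tz). unfold T in H; simpl in H. lra. }
    assert (F2 : (- c * (fst (f z) - fst w) + a * (snd (f z) - snd w)) / J = 0).
    { assert (H := f_equal snd Tz). unfold T in H; simpl in H. lra. }
    assert (G1 : e * (fst (f z) - fst w) - b * (snd (f z) - snd w) = 0).
    { apply (f_equal (fun t => t * J)) in F1. unfold Rdiv in F1. field_simplify in F1; auto. lra. }
    assert (G2 : - c * (fst (f z) - fst w) + a * (snd (f z) - snd w) = 0).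
    { apply (f_equal (fun t => t * J)) in F2. unfold Rdiv in F2. field_simplify in F2; auto. lra. }
    set (P := fst (f z) - fst w) in *. set (Q := snd (f z) - snd w) in *.
    assert (JP : J * P = a * (e * P - b * Q) + b * (- c * P + a * Q)) by (unfold J; ring).
    assert (JQ : J * Q = c * (e * P - b * Q) + e * (- c * P + a * Q)) by (unfold J; ring).
    rewrite G1, G2 in JP, JQ. rewrite !Rmult_0_r, Rplus_0_r in JP, JQ.
    apply Rmult_integral in JP. apply Rmult_integral in JQ.
    destruct JP as [JP|JP]; [contradiction|]. destruct JQ as [JQ|JQ]; [contradiction|].
    unfold P, Q in *. apply injective_projections; lra.
Qed.

Lemma Cmod_sym (x y : C) : Cmod (x - y)%C = Cmod (y - x)%C.
Proof. destruct x, y. unfold Cmod; simpl. f_equal. ring. Qed.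

Lemma Cmod_sub_pos (x y : C) : x <> y -> 0 < Cmod (x - y)%C.
Proof.
  intros H. destruct (Cmod_ge_0 (x - y)%C) as [H1|H1]; auto. exfalso. apply H.
  symmetry in H1. apply Cmod_eq_0 in H1. destruct x, y. injection H1; intros.
  apply injective_projections; simpl; lra.
Qed.

Lemma Cmod_le_sub (x y : C) : Cmod x <= Cmod (x - y)%C + Cmod y.
Proof.
  replace x with ((x - y) + y)%C at 1. apply Cmod_triangle.
  destruct x, y; apply injective_projections; simpl; ring.
Qed.

Lemma box_self t r : 0 < r -> box t r t.
Proof. intros; unfold box; rewrite !Rminus_diag, Rabs_R0; split; auto. Qed.

Lemma box_mono t r r' z : r <= r' -> box t r z -> box t r' z.
Proof. intros Hle [A B]; split; lra. Qed.

Lemma box_Cmod t r z : box t r z -> Cmod (z - t)%C < 2 * r.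
Proof. intros [A B]. pose proof (Cmod_sub_comps z t). lra. Qed.

Section Local.
Variables (D : C -> Prop) (f : C -> C).
Hypotheses (HD : open D) (Hb : bounded_set D) (Hh : harmonic_on D f)
  (Hpole : forall alpha, P_set D alpha -> is_pole f alpha)
  (Hcont : forall z, boundary D z -> ~ P_set D z ->
     forall eps : R, 0 < eps -> exists delta : R, 0 < delta /\
       forall w, closure D w -> ~ P_set D w -> Cmod (w - z) < delta ->
         Cmod (f w - f z) < eps).

Lemma f_cont (t : C) (e : R) : D t -> 0 < e -> exists rho, 0 < rho /\ forall z, box t rho z -> Cmod (f z - f t)%C < e.
Proof.
  intros Dt He. destruct Hh as [Hu Hv].
  destruct (Hu t Dt) as [[_ [_ [_ [_ [_ [_ [Cu _]]]]]]] _].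
  destruct (Hv t Dt) as [[_ [_ [_ [_ [_ [_ [Cv _]]]]]]] _].
  destruct (cont_extract _ _ (e/2) Cu ltac:(lra)) as [r1 [Hr1 H1]].
  destruct (cont_extract _ _ (e/2) Cv ltac:(lra)) as [r2 [Hr2 H2]].
  exists (Rmin r1 r2). split. apply Rmin_pos; auto.
  intros z Hz. specialize (H1 z (box_mono _ _ _ _ (Rmin_l _ _) Hz)).
  specialize (H2 z (box_mono _ _ _ _ (Rmin_r _ _) Hz)).
  rewrite !re_eq in H1. rewrite !im_eq in H2.
  pose proof (Cmod_sub_comps (f z) (f t)). lra.
Qed.

Definition Good (w0 t : C) (dl : R) : Prop :=
  0 < dl /\
  (forall z, D z -> box t dl z -> dl <= Cmod (f z - w0)%C \/ Fib D f w0 t) /\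
  (Fib D f w0 t ->
     (forall z, box t dl z -> D z) /\
     (forall z1 z2, box t dl z1 -> box t dl z2 -> f z1 = f z2 -> z1 = z2) /\
     (forall sg w, 0 < sg <= dl -> Cmod (w - w0)%C < dl * sg -> exists z, box t sg z /\ f z = w)).


Lemma good_exists (w0 t : C) :
  ~ image f (critical_set D f) w0 ->
  ~ image f (fun z => boundary D z /\ ~ P_set D z) w0 ->
  exists dl, Good w0 t dl.
Proof.
  intros HS HB.
  assert (Away : forall e rho, 0 < e -> 0 < rho -> Cmod (f t - w0)%C = 2 * e -> ~ Fib D f w0 t ->
     (forall z, D z -> box t rho z -> Cmod (f z - f t)%C < e) -> exists dl, Good w0 t dl).
  { intros e rho He Hr Ee NF H. exists (Rmin rho e).
    split; [apply Rmin_pos; auto|]. split.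
    - intros z Dz Bz. left. specialize (H z Dz (box_mono _ _ _ _ (Rmin_l _ _) Bz)).
      pose proof (Cmod_tri3 (f t) (f z) w0). rewrite Cmod_sym in H.
      pose proof (Rmin_r rho e). lra.
    - intros F; contradiction. }
  destruct (classic (D t)) as [Dt|NDt].
  - destruct (classic (f t = w0)) as [Ef|Nf].
    + assert (HJ : jacobian f t <> 0).
      { intros HJ. apply HS. exists t. split; auto. split; auto. }
      destruct (IFT D f HD Hh t Dt HJ) as [rho [c [Hr [Hc [HDb [Hinj Hsur]]]]]].
      exists (Rmin rho c). pose proof (Rmin_l rho c). pose proof (Rmin_r rho c).
      split; [apply Rmin_pos; auto|]. split.
      * intros; right; split; auto.
      * intros _. split; [|split].
        -- intros z Hz. apply HDb. eapply box_mono; eauto.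
        -- intros z1 z2 B1 B2. apply Hinj; eapply box_mono; eauto.
        -- intros sg w Hsg Hw. apply Hsur. lra. rewrite Ef. eapply Rlt_le_trans; eauto.
           apply Rmult_le_compat_r; lra.
    + assert (Hp := Cmod_sub_pos _ _ Nf).
      destruct (f_cont t (Cmod (f t - w0)%C / 2) Dt ltac:(lra)) as [rho [Hr H]].
      apply (Away (Cmod (f t - w0)%C / 2) rho); auto; try lra.
      intros [_ E]; contradiction.
  - assert (NF : ~ Fib D f w0 t) by (intros [Dt _]; contradiction).
    destruct (classic (closure D t)) as [Ct|NCt].
    + destruct (classic (P_set D t)) as [Pt|NPt].
      * destruct (Hpole t Pt) as [_ Hinf].
        destruct (Hinf (Cmod w0 + 1)) as [d1 [Hd1 H1]].
        exists (Rmin (d1 / 2) 1). split. apply Rmin_pos; lra. split.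
        -- intros z Dz Bz. left.
           assert (Bz' := box_Cmod _ _ _ (box_mono _ _ _ _ (Rmin_l _ _) Bz)).
           assert (Nzt : z <> t) by (intros E; subst; contradiction).
           assert (Hp := Cmod_sub_pos _ _ Nzt).
           pose proof (Rmin_l (d1/2) 1). assert (Hlt : Cmod (z - t)%C < d1) by lra. specialize (H1 z (conj Hp Hlt)).
           pose proof (Cmod_le_sub (f z) w0). pose proof (Rmin_r (d1/2) 1). lra.
        -- intros F; contradiction.
      * assert (Bt : boundary D t).
        { split; auto. intros [eps [He Hi]]. apply NDt. apply Hi. rewrite Cmod_self. auto. }
        assert (Nf : f t <> w0).
        { intros E. apply HB. exists t. split; auto. }
        assert (Hp := Cmod_sub_pos _ _ Nf).
        destruct (Hcont t Bt NPt (Cmod (f t - w0)%C / 2) ltac:(lra)) as [d0 [Hd0 H0]].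
        apply (Away (Cmod (f t - w0)%C / 2) (d0 / 2)); auto; try lra.
        intros z Dz Bz. apply H0.
        -- intros eps He. exists z. split; auto. rewrite Cmod_self. auto.
        -- intros [_ Nz]. contradiction.
        -- pose proof (box_Cmod _ _ _ Bz). lra.
    + assert (Hex : exists eps, 0 < eps /\ forall w, D w -> eps <= Cmod (w - t)%C).
      { apply NNPP. intros Hn. apply NCt. intros eps He.
        apply NNPP. intros Hn2. apply Hn. exists eps. split; auto.
        intros w Dw. apply Rnot_lt_le. intros Hl. apply Hn2. exists w; split; auto. }
      destruct Hex as [eps [He Hw]].
      exists (eps / 2). split. lra. split.
      * intros z Dz Bz. exfalso. specialize (Hw z Dz). pose proof (box_Cmod _ _ _ Bz). lra.
      * intros F; contradiction.
Qed.

Lemma local (w0 : C) :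
  ~ image f (critical_set D f) w0 ->
  ~ image f (fun z => boundary D z /\ ~ P_set D z) w0 ->
  exists r, 0 < r /\ forall w, Cmod (w - w0)%C < r -> same_card (Fib D f w0) (Fib D f w).
Proof.
  intros HS HB.
  set (dl := fun t => proj1_sig (constructive_indefinite_description _ (good_exists w0 t HS HB))).
  assert (Gd : forall t, Good w0 t (dl t)).
  { intros t. unfold dl. apply (proj2_sig (constructive_indefinite_description _ (good_exists w0 t HS HB))). }
  assert (Pos : forall t, 0 < dl t / 2) by (intros t; destruct (Gd t) as [H _]; lra).
  destruct Hb as [M HM].
  destruct (compactness_value_2d (-M) M (-M) M (fun u v => mkposreal _ (Pos (u, v)))) as [d Hd].
  assert (Hd0 : 0 < d) by apply cond_pos.
  assert (Cover : forall z, D z -> exists t, box t (dl t / 2) z /\ d <= dl t / 2).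
  { intros z Dz. pose proof (HM z Dz) as Hz.
    pose proof (Cmod_ge_fst z). pose proof (Cmod_ge_snd z).
    apply Rabs_le_between in H. apply Rabs_le_between in H0. 
    specialize (Hd (fst z) (snd z) ltac:(lra) ltac:(lra)).
    apply NNPP. intros Hn. apply Hd. intros [u [v [_ [_ [A [B E]]]]]]. apply Hn.
    exists (u, v). simpl in *. split; [split; simpl; auto|auto]. }
  assert (Gpos : forall t, 0 < dl t) by (intros t; destruct (Gd t) as [H _]; auto).
  assert (Fd : forall zi, Fib D f w0 zi -> 2 * d <= dl zi).
  { intros zi Fi. destruct Fi as [Di Ei]. destruct (Cover zi Di) as [t [Bt Ht]].
    destruct (Gd t) as [Ht0 [G1 G2]].
    assert (Bt' : box t (dl t) zi) by (eapply box_mono; [|exact Bt]; lra).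
    destruct (G1 zi Di Bt') as [A|Ft].
    - rewrite Ei, Cmod_self in A. lra.
    - destruct (G2 Ft) as [_ [Inj _]].
      assert (E : t = zi).
      { apply Inj; auto. apply box_self; auto. destruct Ft as [_ Et]. congruence. }
      subst t. lra. }
  assert (Sep : forall zi zj, Fib D f w0 zi -> Fib D f w0 zj -> box zi (2 * d) zj -> zi = zj).
  { intros zi zj Fi Fj Bj. destruct (Gd zi) as [_ [_ G2]]. destruct (G2 Fi) as [_ [Inj _]].
    apply Inj. apply box_self; auto. eapply box_mono; [|exact Bj]. apply Fd; auto.
    destruct Fi as [_ E1]; destruct Fj as [_ E2]; congruence. }
  assert (Prop_ : forall z, D z -> Cmod (f z - w0)%C < d ->
      exists t, Fib D f w0 t /\ box t (dl t / 2) z).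
  { intros z Dz Hz. destruct (Cover z Dz) as [t [Bt Ht]].
    destruct (Gd t) as [Ht0 [G1 G2]].
    assert (Bt' : box t (dl t) z) by (eapply box_mono; [|exact Bt]; lra).
    destruct (G1 z Dz Bt') as [A|Ft]. lra. exists t; auto. }
  exists (Rmin d (d * d)). split. { apply Rmin_pos; nra. }
  intros w Hw. pose proof (Rmin_l d (d * d)). pose proof (Rmin_r d (d * d)).
  assert (Ex : forall zi, Fib D f w0 zi -> exists z, box zi (d / 2) z /\ f z = w).
  { intros zi Fi. destruct (Gd zi) as [_ [_ G2]]. destruct (G2 Fi) as [_ [_ Sur]].
    pose proof (Fd zi Fi). apply Sur. lra. rewrite Cmod_sym.
    rewrite Cmod_sym in Hw. assert (d * d <= dl zi * (d / 2)) by nra. lra. }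
  set (g := fun zi => epsilon (inhabits (0%R,0%R) : inhabited C) (fun z => box zi (d / 2) z /\ f z = w)).
  assert (Hg : forall zi, Fib D f w0 zi -> box zi (d / 2) (g zi) /\ f (g zi) = w).
  { intros zi Fi. unfold g. apply (epsilon_spec (inhabits (0%R,0%R) : inhabited C) (fun z => box zi (d / 2) z /\ f z = w)).
    apply Ex; auto. }
  exists g. split; [|split].
  - intros zi Fi. destruct (Hg zi Fi) as [B E]. split; auto.
    destruct (Gd zi) as [_ [_ G2]]. destruct (G2 Fi) as [Dd _]. apply Dd.
    eapply box_mono; [|exact B]. pose proof (Fd zi Fi). lra.
  - intros zi zj Fi Fj E. destruct (Hg zi Fi) as [[A1 A2] _]. destruct (Hg zj Fj) as [[B1 B2] _].
    rewrite E in A1, A2. apply Sep; auto.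
    unfold box. split.
    + replace (fst zj - fst zi) with ((fst (g zj) - fst zi) - (fst (g zj) - fst zj)) by ring.
      eapply Rle_lt_trans. apply Rabs_triang. rewrite Rabs_Ropp. lra.
    + replace (snd zj - snd zi) with ((snd (g zj) - snd zi) - (snd (g zj) - snd zj)) by ring.
      eapply Rle_lt_trans. apply Rabs_triang. rewrite Rabs_Ropp. lra.
  - intros z [Dz Ez].
    assert (Hz : Cmod (f z - w0)%C < d) by (rewrite Ez; lra).
    destruct (Prop_ z Dz Hz) as [t [Ft Bt]]. exists t. split; auto.
    destruct (Hg t Ft) as [B E].
    destruct (Gd t) as [_ [_ G2]]. destruct (G2 Ft) as [_ [Inj _]].
    pose proof (Fd t Ft).
    apply Inj. eapply box_mono; [|exact B]; lra. eapply box_mono; [|exact Bt]; lra. congruence.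
Qed.
End Local.

Theorem corollary4p13 (D : C -> Prop) (f : C -> C) :
  open D ->
  bounded_set D ->
  harmonic_on D f ->
  finite_set (P_set D) ->
  (forall alpha, P_set D alpha -> is_pole f alpha) ->
  (* f extends continuously to (boundary D) \ P; the extension is f itself,
     continuous on closure(D) \ P = D ∪ (boundary D \ P) at those points *)
  (forall z, boundary D z -> ~ P_set D z ->
     forall eps : R, 0 < eps -> exists delta : R, 0 < delta /\
       forall w, closure D w -> ~ P_set D w -> Cmod (w - z) < delta ->
         Cmod (f w - f z) < eps) ->
  forall w1 w2 : C,
    (exists K : C -> Prop, connected_set K /\ K w1 /\ K w2 /\
       forall w, K w ->
         ~ image f (critical_set D f) w /\
         ~ image f (fun z => boundary D z /\ ~ P_set D z) w) ->
    same_card (fun z => D z /\ f z = w1) (fun z => D z /\ f z = w2).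
Proof.
  intros HD Hb Hh _ Hpole Hcont w1 w2 HK.
  exact (wrap D f (local D f HD Hb Hh Hpole Hcont) w1 w2 HK).
Qed.
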